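(* Let $q,m$ be positive integers with $q\ge 2$. Let $\mathbf{A}^{q,m}=[a_{j,k}]$ be the $q^m\times q(m+1)$ array with rows indexed by $j\in[0,q^m)$ and columns by $k\in[0,q(m+1))$, defined as follows. Write $j=(j_{m-1},\dots,j_0)_q$ and $k=uq+v$ with $0\le u\le m$, $0\le v<q$. If $0\le u<m$: $$a_{j,k}=\begin{cases} *, & j_u=v,\\ (j_u-v-1,\ j_{m-1},\dots,j_{u+1},\ v,\ j_{u-1},\dots,j_0)_q, & j_u\ne v.\end{cases}$$ If $u=m$: $$a_{j,k}=\begin{cases} *, & j_0+\cdots+j_{m-1}=v,\\ (v-\textstyle\sum_{l=0}^{m-1}j_l-1,\ j_{m-1},\dots,j_0)_q, & j_0+\cdots+j_{m-1}\ne v,\end{cases}$$ where all additions and subtractions of digits (including in the conditions) are performed modulo $q$ (with results in $[0,q)$). Then $\mathbf{A}^{q,m}$ is an $(m+1)$-regular $(q(m+1),\,q^m,\,q^{m-1},\,q^{m+1}-q^m)$ PDA, and its rate $S/F$ equals $q-1$.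
   Context: Notation: $[i,j)=\{i,\dots,j-1\}$. For an integer $s$ with $s=\sum_{l=0}^{n-1}s_lq^l$, $s_l\in[0,q)$, we write $s=(s_{n-1},\dots,s_0)_q$ (the $q$-ary representation; the leftmost digit is most significant). For positive integers $K,F,Z,S$ and an integer $g$, an $F\times K$ array $\mathbf{P}=[p_{j,k}]$ whose entries are either a special symbol $*$ or one of the integers $0,1,\dots,S-1$ is a $g$-regular $(K,F,Z,S)$ PDA if: (C1) the symbol $*$ appears exactly $Z$ times in each column; (C2') each integer in $[0,S)$ appears exactly $g$ times in $\mathbf{P}$; (C3) for any two distinct entries with $p_{j_1,k_1}=p_{j_2,k_2}=s$ an integer, we have $j_1\neq j_2$, $k_1\neq k_2$, and $p_{j_1,k_2}=p_{j_2,k_1}=*$. The rate of such a PDA (i.e. of its associated caching scheme) is $R=S/F$. *)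

(* Defs.v *)
From mathcomp Require Import all_boot all_order all_algebra.
Set Implicit Arguments. Unset Strict Implicit. Unset Printing Implicit Defensive.

(* An F x K array whose entries are either the star symbol (None) or an
   integer (Some s). *)
Definition array (F K : nat) := 'I_F -> 'I_K -> option nat.

Definition regular_PDA (g K F Z S : nat) (P : array F K) : Prop :=
  [/\ (forall (j : 'I_F) (k : 'I_K) (s : nat), P j k = Some s -> s < S),
      (forall k : 'I_K, #|[set j : 'I_F | P j k == None]| = Z),
      (forall s, s < S ->
         #|[set jk : 'I_F * 'I_K | P jk.1 jk.2 == Some s]| = g) &
      (forall (j1 j2 : 'I_F) (k1 k2 : 'I_K) (s : nat),
         (j1, k1) != (j2, k2) -> P j1 k1 = Some s -> P j2 k2 = Some s ->
         [/\ j1 != j2, k1 != k2, P j1 k2 = None & P j2 k1 = None])].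

Arguments regular_PDA : clear implicits.

Definition rate (S F : nat) : rat := (S%:R / F%:R)%R.

Definition digit (q j l : nat) : nat := (j %/ q ^ l) %% q.

Definition Aqm (q m : nat) : array (q ^ m) (q * (m + 1)) :=
  fun j k =>
    let u := k %/ q in
    let v := k %% q in
    if u < m then
      if digit q j u == v then None
      else Some (((digit q j u + 2 * q - v - 1) %% q) * q ^ m
                 + \sum_(l < m) (if l == u :> nat then v else digit q j l) * q ^ l)
    else
      let sm := (\sum_(l < m) digit q j l) %% q in
      if sm == v then None
      else Some (((v + 2 * q - sm - 1) %% q) * q ^ m
                 + \sum_(l < m) digit q j l * q ^ l).

Arguments Aqm : clear implicits.
Arguments digit : clear implicits.
Arguments rate : clear implicits.

(* Main.v *)
Require Import Defs.
From mathcomp Require Import all_boot all_order all_algebra zify.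
Set Implicit Arguments. Unset Strict Implicit. Unset Printing Implicit Defensive.
Import GRing.Theory Num.Theory.

Definition Nv (q m : nat) (d : nat -> nat) := \sum_(l < m) d l * q ^ l.

Lemma digit_lt q j l : 0 < q -> digit q j l < q.
Proof. by move=> q0; rewrite /digit ltn_pmod. Qed.

Lemma digitS q j l : digit q j l.+1 = digit q (j %/ q) l.
Proof. by rewrite /digit expnS divnMA. Qed.

Lemma digit0 q j : digit q j 0 = j %% q.
Proof. by rewrite /digit expn0 divn1. Qed.

Lemma NvS q m d : Nv q m.+1 d = d 0 + q * Nv q m (fun l => d l.+1).
Proof.
rewrite /Nv big_ord_recl /= expn0 muln1 big_distrr /=; congr (_ + _).
by apply: eq_bigr => i _; rewrite /bump /= add1n expnS mulnCA.
Qed.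

Lemma Nv_lt q m d : 0 < q -> (forall l, l < m -> d l < q) -> Nv q m d < q ^ m.
Proof.
move=> q0; elim: m d => [|m IH] d H; first by rewrite /Nv big_ord0.
rewrite NvS expnS.
have h0 : d 0 < q by apply: H.
have h1 := IH (fun l => d l.+1) (fun l hl => H l.+1 hl).
nia.
Qed.

Lemma digit_Nv q m d l : 0 < q -> (forall l, l < m -> d l < q) -> l < m ->
  digit q (Nv q m d) l = d l.
Proof.
move=> q0; elim: m d l => [|m IH] d l H hl //.
rewrite NvS; case: l hl => [|l] hl.
  by rewrite digit0 addnC mulnC modnMDl modn_small //; apply: H.
rewrite digitS addnC mulnC divnMDl // divn_small ?addn0; last by apply: H.
by rewrite IH // => l' hl'; apply: H.
Qed.

Lemma Nv_digit q m j : 0 < q -> j < q ^ m -> Nv q m (digit q j) = j.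
Proof.
move=> q0; elim: m j => [|m IH] j hj.
  by rewrite /Nv big_ord0; move: hj; rewrite expn0; case: j.
rewrite NvS.
have -> : Nv q m (fun l => digit q j l.+1) = Nv q m (digit q (j %/ q)) by apply: eq_bigr => i _; rewrite digitS.
rewrite IH; last by rewrite ltn_divLR // -expnSr.
by rewrite digit0 addnC mulnC -divn_eq.
Qed.

Lemma digitMD q m t y l : 0 < q -> l < m -> digit q (t * q ^ m + y) l = digit q y l.
Proof.
move=> q0 hl; rewrite /digit.
have -> : q ^ m = q ^ (m - l).-1 * q * q ^ l by rewrite -expnSr prednK ?subn_gt0 // -expnD subnK // ltnW.
by rewrite mulnA divnMDl ?expn_gt0 ?q0 // mulnA modnMDl.
Qed.

Lemma digit_mod q m x l : 0 < q -> l < m -> digit q (x %% q ^ m) l = digit q x l.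
Proof.
by move=> q0 hl; rewrite -(digitMD (x %/ q ^ m) _ q0 hl) -divn_eq.
Qed.

Lemma sub_mod q a v t : v < q -> t < q -> (t + v.+1 == a %[mod q]) ->
  (a + 2 * q - v - 1) %% q = t.
Proof.
move=> vq tq H.
have e : a + 2 * q - v - 1 + v.+1 = a + 2 * q by lia.
rewrite -(modn_small tq); apply/eqP.
by rewrite -(eqn_modDr v.+1) e (eqP H) addnC modnMDl.
Qed.

Lemma lead_lt q a v : 0 < q -> a < q -> v < q -> a != v -> (a + 2 * q - v - 1) %% q < q.-1.
Proof.
move=> q0 aq vq av.
have h := ltn_pmod (a + 2 * q - v - 1) q0.
rewrite ltn_neqAle -ltnS prednK // h andbT.
apply: contra av => /eqP E.
have e : a + 2 * q - v - 1 + v.+1 = a + 2 * q by lia.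
have : (a + 2 * q - v - 1 + v.+1) %% q = (q.-1 + v.+1) %% q by rewrite -modnDml E.
rewrite e addnS -addSn prednK // modnDl addnC modnMDl.
by rewrite !modn_small // => ->.
Qed.

Lemma shift_ne q t d : t < q.-1 -> (t + 1 + d) %% q != d %% q.
Proof.
move=> tq; rewrite -{2}(add0n d) eqn_modDr mod0n modn_small; last by lia.
by rewrite addn1.
Qed.

Lemma sum_change m (f d : nat -> nat) p : p < m ->
  (forall l, l < m -> l != p -> f l = d l) ->
  \sum_(l < m) f l + d p = \sum_(l < m) d l + f p.
Proof.
move=> pm H.
rewrite [\sum_(l < m) f l](bigD1 (Ordinal pm)) // [\sum_(l < m) d l](bigD1 (Ordinal pm)) //=.
rewrite (eq_bigr (fun l : 'I_m => d l)); first by lia.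
move=> i /= hi; apply: H => //.
Qed.

Lemma addmod_back q a b X : a < q -> b < q -> X %% q = b ->
  ((a + 2 * q - b - 1) %% q + 1 + X) %% q = a.
Proof.
move=> aq bq hX.
rewrite -addnA modnDml addnA -modnDmr hX.
have -> : a + 2 * q - b - 1 + 1 + b = 2 * q + a by lia.
by rewrite modnMDl modn_small.
Qed.

Lemma bound_lt L N Q p : N < Q -> L < p -> L * Q + N < p * Q.
Proof.
move=> hN hL; apply: (@leq_trans (L.+1 * Q)).
  by rewrite mulSn addnC ltn_add2r.
by rewrite leq_mul2r hL orbT.
Qed.

Definition Anat (q m j k : nat) : option nat :=
    let u := k %/ q in
    let v := k %% q in
    if u < m then
      if digit q j u == v then None
      else Some (((digit q j u + 2 * q - v - 1) %% q) * q ^ m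
                 + Nv q m (fun l => if l == u then v else digit q j l))
    else
      let sm := (\sum_(l < m) digit q j l) %% q in
      if sm == v then None
      else Some (((v + 2 * q - sm - 1) %% q) * q ^ m
                 + Nv q m (digit q j)).

Lemma AqmE q m (j : 'I_(q ^ m)) (k : 'I_(q * (m + 1))) : Aqm q m j k = Anat q m j k.
Proof. by []. Qed.

Definition Jf q m u s :=
  if u < m then Nv q m (fun l => if l == u then (s %/ q ^ m + 1 + digit q s u) %% q else digit q s l)
  else s %% q ^ m.

Definition Kf q m u s :=
  if u < m then u * q + digit q s u
  else m * q + (s %/ q ^ m + 1 + \sum_(l < m) digit q s l) %% q.

Lemma eq_Nv q m f g : (forall l, l < m -> f l = g l) -> Nv q m f = Nv q m g.
Proof. by move=> H; apply: eq_bigr => i _; rewrite H. Qed.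

Lemma Jlt q m u s : 0 < q -> Jf q m u s < q ^ m.
Proof.
move=> q0; rewrite /Jf; case: ifP => _; last by rewrite ltn_pmod ?expn_gt0 ?q0.
apply: Nv_lt => // l _; case: ifP => _; rewrite ?ltn_pmod //; exact: digit_lt.
Qed.

Lemma JdigL q m u s l : 0 < q -> u < m -> l < m ->
  digit q (Jf q m u s) l = if l == u then (s %/ q ^ m + 1 + digit q s u) %% q else digit q s l.
Proof.
move=> q0 um lm; rewrite /Jf um digit_Nv // => l' _.
case: ifP => _; rewrite ?ltn_pmod //; exact: digit_lt.
Qed.

Lemma JdigM q m s l : 0 < q -> l < m -> digit q (Jf q m m s) l = digit q s l.
Proof. by move=> q0 lm; rewrite /Jf ltnn digit_mod. Qed.

Lemma Kdiv q m u s : 0 < q -> u <= m -> Kf q m u s %/ q = u.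
Proof.
move=> q0 um; rewrite /Kf; case: ifP => h; rewrite divnMDl // divn_small ?addn0 //.
  all: first [exact: digit_lt | exact: ltn_pmod | lia].
Qed.

Lemma Kmod q m u s : 0 < q -> u <= m -> Kf q m u s %% q =
  if u < m then digit q s u else (s %/ q ^ m + 1 + \sum_(l < m) digit q s l) %% q.
Proof.
move=> q0 um; rewrite /Kf; case: ifP => _; rewrite modnMDl modn_small //.
  all: first [exact: digit_lt | exact: ltn_pmod].
Qed.

Lemma Klt q m u s : 0 < q -> u <= m -> Kf q m u s < q * (m + 1).
Proof.
move=> q0 um.
have h1 := ltn_pmod (Kf q m u s) q0; have h2 := Kdiv s q0 um.
move: (divn_eq (Kf q m u s) q); rewrite h2 => ->.
nia.
Qed.

Lemma t_lt q m s : 0 < q -> s < q ^ (m + 1) - q ^ m -> s %/ q ^ m < q.-1.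
Proof.
move=> q0 hs; rewrite ltn_divLR ?expn_gt0 ?q0 //.
suff -> : q.-1 * q ^ m = q ^ (m + 1) - q ^ m by [].
by rewrite addn1 expnS -subn1 mulnBl mul1n.
Qed.

Lemma backward q m u s : 0 < q -> s < q ^ (m + 1) - q ^ m -> u <= m ->
  Anat q m (Jf q m u s) (Kf q m u s) = Some s.
Proof.
move=> q0 hs um; have tq := t_lt q0 hs.
set t := s %/ q ^ m.
rewrite /Anat Kdiv // Kmod //.
case: ltnP => um'.
  rewrite JdigL // eqxx.
  have dq := digit_lt s u q0.
  rewrite ifF; last by apply/negbTE; have := shift_ne (digit q s u) tq; rewrite (modn_small dq).
  apply: f_equal.
  rewrite (sub_mod (t := t)) //; last 2 first.
  - by lia.
  - by rewrite modn_mod addnS addn1.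
  rewrite (@eq_Nv q m _ (digit q (s %% q ^ m))); last first.
    move=> l lm; rewrite digit_mod //; case: eqP => [->|ne] //.
    by rewrite JdigL // ifF //; apply/eqP.
  by rewrite Nv_digit ?ltn_pmod ?expn_gt0 ?q0 // -divn_eq.
have -> : u = m by lia.
have es : \sum_(l < m) digit q (Jf q m m s) l = \sum_(l < m) digit q s l.
  by apply: eq_bigr => l _; rewrite JdigM.
rewrite es.
set S := \sum_(l < m) digit q s l.
rewrite ifF; last first.
  by apply/negbTE; rewrite eq_sym; exact: shift_ne.
apply: f_equal.
rewrite (sub_mod (t := s %/ q ^ m)) //.
- by rewrite Nv_digit ?Jlt // /Jf ltnn -divn_eq.
- by rewrite ltn_pmod.
- by lia.
- have -> : s %/ q ^ m + (S %% q).+1 = (s %/ q ^ m + 1) + S %% q by lia.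
  by rewrite modn_mod modnDmr.
Qed.

Lemma forward q m j k s : 0 < q -> j < q ^ m -> k < q * (m + 1) ->
  Anat q m j k = Some s ->
  [/\ k %/ q <= m, j = Jf q m (k %/ q) s, k = Kf q m (k %/ q) s
    & s < q ^ (m + 1) - q ^ m].
Proof.
move=> q0 jm km.
have um : k %/ q <= m.
  have : k %/ q < m + 1 by rewrite ltn_divLR // mulnC.
  lia.
have hS : q ^ (m + 1) - q ^ m = q.-1 * q ^ m by rewrite addn1 expnS -subn1 mulnBl mul1n.
have qm0 : 0 < q ^ m by rewrite expn_gt0 q0.
have vq : k %% q < q by rewrite ltn_pmod.
rewrite /Anat; case: ltnP => um'.
  set u := k %/ q; set v := k %% q.
  set a := digit q j u.
  have aq : a < q by exact: digit_lt.
  case: eqP => // /eqP av [<-].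
  set L := (a + 2 * q - v - 1) %% q.
  set f := fun l => if l == u then v else digit q j l.
  have fq : forall l, l < m -> f l < q.
    by move=> l _; rewrite /f; case: ifP => _ //; exact: digit_lt.
  have Nlt := Nv_lt q0 fq.
  have Llt : L < q.-1 by exact: lead_lt.
  have eL : (L * q ^ m + Nv q m f) %/ q ^ m = L by rewrite divnMDl // divn_small ?addn0.
  have ed : forall l, l < m -> digit q (L * q ^ m + Nv q m f) l = f l.
    by move=> l lm; rewrite digitMD // digit_Nv.
  split => //.
  - rewrite /Jf um' eL -{1}(Nv_digit q0 jm); apply: eq_Nv => l lm.
    rewrite !ed //; case: eqP => [->|ne].
      by rewrite /f eqxx addmod_back // modn_small.
    by rewrite /f; case: eqP.
  - by rewrite /Kf um' ed // /f eqxx [LHS](divn_eq k q) mulnC.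
  - by rewrite hS; apply: bound_lt.
have eu : k %/ q = m by lia.
rewrite eu.
set v := k %% q.
set sm := (\sum_(l < m) digit q j l) %% q.
have smq : sm < q by rewrite ltn_pmod.
case: eqP => // /eqP av [<-].
set L := (v + 2 * q - sm - 1) %% q.
rewrite (Nv_digit q0 jm).
have Llt : L < q.-1 by apply: lead_lt; rewrite // eq_sym.
have eL : (L * q ^ m + j) %/ q ^ m = L by rewrite divnMDl // divn_small ?addn0.
split => //.
- by rewrite /Jf ltnn modnMDl modn_small.
- rewrite /Kf ltnn eL.
  rewrite (eq_bigr (fun l : 'I_m => digit q j l)); last by move=> l _; rewrite digitMD.
  by rewrite addmod_back // -eu -divn_eq.
- by rewrite hS; apply: bound_lt.
Qed.

Lemma equi_count (T : finType) q (g : T -> nat) (h : T -> T) :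
  0 < q -> (forall x, g x < q) -> injective h ->
  (forall x, g (h x) = (g x + 1) %% q) ->
  forall v, v < q -> q * #|[set x | g x == v]| = #|T|.
Proof.
move=> q0 gq hinj hg.
pose c v := #|[set x | g x == v]|.
have step : forall v, c v <= c ((v + 1) %% q).
  move=> v; rewrite /c -(card_imset _ hinj); apply: subset_leq_card.
  apply/subsetP => y /imsetP [x]; rewrite !inE => /eqP <- ->.
  by rewrite hg.
have chain : forall v n, c v <= c ((v + n) %% q).
  move=> v; elim=> [|n IH].
    rewrite addn0 /c.
    case: (ltnP v q) => vq; first by rewrite modn_small.
    have -> : [set x | g x == v] = set0.
      by apply/setP => x; rewrite !inE; apply/negbTE; move: (gq x); case: eqP => // ->; rewrite ltnNge vq.
    by rewrite cards0.
  apply: (leq_trans IH); apply: (leq_trans (step _)).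
  by rewrite modnDml -addnA addn1.
have all_eq : forall v w, v < q -> w < q -> c v = c w.
  have le : forall v w, v < q -> w < q -> c v <= c w.
    move=> v w vq wq; have := chain v (w + q - v).
    have -> : v + (w + q - v) = w + q by lia.
    by rewrite modnDr modn_small.
  by move=> v w vq wq; apply/eqP; rewrite eqn_leq !le.
move=> v vq.
have tot : \sum_(w < q) c w = #|T|.
  pose gO := fun x => Ordinal (gq x).
  rewrite -sum1_card (partition_big gO xpredT) //=.
  apply: eq_bigr => w _; rewrite /c -sum1_card; apply: eq_bigl => x.
  by rewrite !inE /gO -val_eqE.
rewrite -tot (eq_bigr (fun _ => c v)); last by move=> w _; apply: all_eq.
by rewrite sum_nat_const card_ord.
Qed.

Definition gcol q m u j := if u < m then digit q j u else (\sum_(l < m) digit q j l) %% q.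

Lemma Anat_None q m j k : (Anat q m j k == None) = (gcol q m (k %/ q) j == k %% q).
Proof.
rewrite /Anat /gcol; case: ifP => _; case: ifP => //.
Qed.

Definition incr q m p j :=
  Nv q m (fun l => if l == p then (digit q j p + 1) %% q else digit q j l).

Lemma incr_fq q m p j : 0 < q -> forall l, l < m ->
  (if l == p then (digit q j p + 1) %% q else digit q j l) < q.
Proof. by move=> q0 l _; case: ifP => _; [rewrite ltn_pmod | exact: digit_lt]. Qed.

Lemma incr_lt q m p j : 0 < q -> incr q m p j < q ^ m.
Proof. by move=> q0; apply: Nv_lt => //; apply: incr_fq. Qed.

Lemma incr_dig q m p j l : 0 < q -> l < m ->
  digit q (incr q m p j) l = if l == p then (digit q j p + 1) %% q else digit q j l.
Proof. by move=> q0 lm; rewrite digit_Nv //; apply: incr_fq. Qed.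

Lemma col_count q m u v : 0 < q -> 0 < m -> v < q ->
  q * #|[set j : 'I_(q ^ m) | gcol q m u j == v]| = q ^ m.
Proof.
move=> q0 m0 vq.
pose p := if u < m then u else 0.
have pm : p < m by rewrite /p; case: ifP.
pose h := fun j : 'I_(q ^ m) => Ordinal (@incr_lt q m p j q0).
rewrite -[RHS]card_ord.
apply: (@equi_count _ q (fun j : 'I_(q ^ m) => gcol q m u j) h) => //.
- by move=> x; rewrite /gcol; case: ifP => _; [exact: digit_lt | rewrite ltn_pmod].
- move=> x y /(congr1 val) /= e.
  apply: val_inj => /=.
  rewrite -(Nv_digit q0 (ltn_ord x)) -(Nv_digit q0 (ltn_ord y)).
  apply: eq_Nv => l lm.
  have := congr1 (fun z => digit q z l) e; rewrite /= !incr_dig //.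
  case: eqP => [->|_] // /eqP.
  rewrite eqn_modDr !modn_small ?digit_lt // => /eqP //.
- move=> x; rewrite /gcol /=; case: ifP => um.
    by rewrite incr_dig // /p um eqxx.
  have hs := @sum_change m (digit q (incr q m p x)) (digit q x) p pm.
  have e : \sum_(l < m) digit q (incr q m p x) l + digit q x p =
           \sum_(l < m) digit q x l + (digit q x p + 1) %% q.
    rewrite hs; first by rewrite incr_dig // eqxx.
    by move=> l lm ne; rewrite incr_dig // ifN.
  have : (\sum_(l < m) digit q (incr q m p x) l + digit q x p ==
          (\sum_(l < m) digit q x l + 1) + digit q x p %[mod q]).
    by rewrite e modnDmr -addnA (addnC 1) addnA.
  by rewrite eqn_modDr => /eqP ->; rewrite modnDml.
Qed.

Lemma cross q m u1 u2 s : 0 < q -> u1 <= m -> u2 <= m -> u1 != u2 ->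
  Anat q m (Jf q m u1 s) (Kf q m u2 s) = None.
Proof.
move=> q0 h1 h2 ne.
rewrite /Anat Kdiv // Kmod //.
case: (ltnP u2 m) => u2m.
  case: (ltnP u1 m) => u1m.
    have ne2 : (u2 == u1) = false by rewrite eq_sym; apply/negbTE.
    by rewrite JdigL // ne2 eqxx.
  have -> : u1 = m by lia.
  by rewrite JdigM // eqxx.
have e2 : u2 = m by lia.
have u1m : u1 < m by move: ne; rewrite e2 => ne; lia.
rewrite ifT //.
set t := s %/ q ^ m.
have hs := @sum_change m (digit q (Jf q m u1 s)) (digit q s) u1 u1m.
have e : \sum_(l < m) digit q (Jf q m u1 s) l + digit q s u1 =
         \sum_(l < m) digit q s l + (t + 1 + digit q s u1) %% q.
  rewrite hs; first by rewrite JdigL // eqxx.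
  by move=> l lm nel; rewrite JdigL // ifN.
have : (\sum_(l < m) digit q (Jf q m u1 s) l + digit q s u1 ==
        (t + 1 + \sum_(l < m) digit q s l) + digit q s u1 %[mod q]).
  by rewrite e modnDmr addnC -!addnA (addnC (digit q s u1)).
by rewrite eqn_modDr.
Qed.

Lemma ord_le m (u : 'I_(m + 1)) : u <= m.
Proof. by have := ltn_ord u; move: (nat_of_ord u) => x; lia. Qed.

Unset Implicit Arguments.
Theorem theorem4 (q m : nat) :
  2 <= q -> 0 < m ->
  regular_PDA (m + 1) (q * (m + 1)) (q ^ m) (q ^ (m - 1)) (q ^ (m + 1) - q ^ m)
    (Aqm q m)
  /\ rate (q ^ (m + 1) - q ^ m) (q ^ m) = ((q - 1)%:R)%R.
Proof.
move=> q2 m0.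
have q0 : 0 < q by lia.
have hS : q ^ (m + 1) - q ^ m = (q - 1) * q ^ m by rewrite addn1 expnS mulnBl mul1n.
split; last first.
  rewrite /rate hS natrM mulfK //.
  by rewrite pnatr_eq0 -lt0n expn_gt0 q0.
split.
- move=> j k s; rewrite AqmE => /forward.
  by case/(_ q0 (ltn_ord j) (ltn_ord k)).
- move=> k.
  have := @col_count q m (k %/ q) (k %% q) q0 m0 (ltn_pmod k q0).
  have e : q ^ m = q * q ^ (m - 1) by rewrite -expnS subn1 prednK.
  rewrite [in RHS]e => /eqP; rewrite eqn_pmul2l // => /eqP <-.
  by apply: eq_card => j; rewrite !inE AqmE Anat_None.
- move=> s hs.
  pose f := fun u : 'I_(m + 1) =>
    (Ordinal (@Jlt q m u s q0), Ordinal (@Klt q m u s q0 (ord_le u))).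
  have finj : injective f.
    move=> u1 u2 /(congr1 (fun x => val x.2)) /= e.
    apply: ord_inj; rewrite -(Kdiv s q0 (ord_le u1)) -(Kdiv s q0 (ord_le u2)).
    by rewrite e.
  rewrite -[m + 1 in RHS]card_ord -cardsT -(card_imset _ finj).
  apply: eq_card => [[j k]]; rewrite !inE /=.
  apply/eqP/imsetP.
    rewrite AqmE => /forward [] // hu ej ek _.
    have hu' : k %/ q < m + 1 by move: hu; move: (k %/ q) => x; lia.
    exists (Ordinal hu'); first by rewrite inE.
    by congr pair; apply: val_inj.
  move=> [u _ [-> ->]] /=.
  by rewrite AqmE backward // ord_le.
- move=> j1 j2 k1 k2 s ne.
  rewrite !AqmE => /forward [] // h1 ej1 ek1 hs1 /forward [] // h2 ej2 ek2 _.
  have neu : k1 %/ q != k2 %/ q.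
    apply: contra ne => /eqP eu.
    apply/eqP; congr pair; apply: ord_inj; [by rewrite ej1 ej2 eu | by rewrite ek1 ek2 eu].
  have c12 : Anat q m j1 k2 = None by rewrite ej1 ek2 cross.
  have c21 : Anat q m j2 k1 = None by rewrite ej2 ek1 cross // eq_sym.
  split; rewrite ?AqmE //.
  + have b2 := backward q0 hs1 h2; rewrite -ej2 -ek2 in b2.
    by apply/negP => /eqP e; move: c12; rewrite e b2.
  + by apply/negP => /eqP e; move/eqP: neu; apply; rewrite e.
Qed.
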